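(* Let $\Phi=\bigwedge_{i=1}^m f_i\mid g_i$ be a system of divisibility constraints in $d$ variables with the elimination property for a total order $\preceq$ of its variables. Then (i) $|\Delta(\Phi)|\le 2m^2(d+2)$, and (ii) every coefficient and constant of every polynomial in $\Delta(\Phi)$ has bit length at most $(d+2)(\langle\|\Phi\|_\infty\rangle+1)$, i.e. $\langle\|\Delta(\Phi)\|_\infty\rangle\le(d+2)(\langle\|\Phi\|_\infty\rangle+1)$.
   Context: Linear polynomials: $f=a_1x_1+\dots+a_dx_d+c$ with integer coefficients; $\gcd(f)=\gcd(a_1,\dots,a_d,c)$; $f$ is primitive if $f\ne0$ and $\gcd(f)=1$; the primitive part of a non-zero $g$ is the unique primitive $f$ with $g=\gcd(g)f$. A system of divisibility constraints is $\Phi=\bigwedge_{i=1}^m f_i\mid g_i$ with $m\ge1$, linear $f_i\ne0$, $g_i$; $\mathrm{terms}(\Phi)=\{f_i,g_i\}$. Divisibility module: for primitive $f$, $M_f(\Phi)$ is the smallest set of linear polynomials containing $f$, closed under integer linear combinations, and such that whenever $g\mid h$ is a constraint of $\Phi$ and $b\cdot g\in M_f(\Phi)$ for some $b\in\mathbb Z$, then $b\cdot h\in M_f(\Phi)$. Leading variable: for a total order $x_1\preceq\dots\preceq x_d$, $\mathrm{lv}(f)$ is the largest variable with non-zero coefficient in $f$, and $\mathrm{lv}(f)=\bot=:x_0$ for constant $f$. Elimination property for $\preceq$: for every primitive part $f$ of a polynomial appearing as a left-hand side in $\Phi$ and every $0\le k\le d$, the set $\{g:\mathrm{lv}(g)\preceq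 x_k\text{ and } f\mid g\text{ appears in }\Phi\}$ is a linearly independent set forming a basis of $M_f(\Phi)\cap\mathbb Z[x_1,\dots,x_k]$. S-polynomials: for $f,g$ with $\mathrm{lv}(f)=x_l$, $\mathrm{lv}(g)=x_k$, $S(f,g)=b_k f-a_l g$ where $a_l$ is the coefficient of $x_l$ in $f$ and $b_k$ that of $x_k$ in $g$ (if $f$ is constant, $a_l:=f$; if $g$ is constant, $b_k:=g$). For primitive $f$, $\Delta_f(\Phi)$ is the smallest set containing $\mathrm{terms}(\Phi)$ such that whenever $f\mid g$ occurs in $\Phi$ and $h\in\Delta_f(\Phi)$ with $\mathrm{lv}(g)=\mathrm{lv}(h)$, then $S(g,h)\in\Delta_f(\Phi)$; $\Delta(\Phi)$ is the union of $\Delta_f(\Phi)$ over all primitive parts $f$ of polynomials in $\mathrm{terms}(\Phi)$. $\|\cdot\|_\infty$ of a set of polynomials is the maximum absolute value of their coefficients and constants; $\langle a\rangle=1+\lceil\log_2(|a|+1)\rceil$. *)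

(* Defs.v *)
From HB Require Import structures.
From mathcomp Require Import all_boot all_order all_algebra all_fingroup.
Set Implicit Arguments. Unset Strict Implicit. Unset Printing Implicit Defensive.
Import Order.TTheory GRing.Theory Num.Theory.
Local Open Scope ring_scope.

(* A linear polynomial a_1 x_1 + ... + a_d x_d + c with integer coefficients:
   (coefficient function, constant). *)
Definition linpoly (d : nat) : Type := ({ffun 'I_d -> int} * int)%type.

Section LinPoly.
Variable d : nat.
Implicit Types p q f g h : linpoly d.

Definition lp0 : linpoly d := ([ffun=> 0], 0).
Definition lp_add p q : linpoly d := ([ffun i => p.1 i + q.1 i], p.2 + q.2).
Definition lp_scale (a : int) p : linpoly d := ([ffun i => a * p.1 i], a * p.2).
Definition lp_sub p q : linpoly d := lp_add p (lp_scale (-1) q).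

Definition lincomb (c : linpoly d -> int) (s : seq (linpoly d)) : linpoly d :=
  foldr (fun g acc => lp_add (lp_scale (c g) g) acc) lp0 s.

Definition lp_gcd p : nat :=
  gcdn (\big[gcdn/0%N]_(i < d) `|p.1 i|%N) `|p.2|%N.

Definition primitive p : bool := (p != lp0) && (lp_gcd p == 1%N).

Definition is_prim_part f g : Prop :=
  g != lp0 /\ primitive f /\ g = lp_scale (lp_gcd g)%:Z f.

Definition lp_norm p : nat := maxn (\max_(i < d) `|p.1 i|%N) `|p.2|%N.

(* Total order on variables given by a rank bijection r : variable i is the
   (r i).+1-th variable x_{(r i)+1} in the order x_1 <= ... <= x_d.
   lvl r p = k when lv(p) = x_k, and lvl r p = 0 when lv(p) = bot = x_0. *)
Definition lvl (r : {perm 'I_d}) p : nat := \max_(i < d | p.1 i != 0) (r i).+1.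

(* coefficient of the leading variable; the constant if p is constant *)
Definition lcoef (r : {perm 'I_d}) p : int :=
  if [pick i | (r i).+1 == lvl r p] is Some i then p.1 i else p.2.

Definition spoly (r : {perm 'I_d}) f g : linpoly d :=
  lp_sub (lp_scale (lcoef r g) f) (lp_scale (lcoef r f) g).

End LinPoly.

(* A system of divisibility constraints /\_i f_i | g_i, as the list of pairs (f_i, g_i). *)
Definition system (d : nat) := seq (linpoly d * linpoly d).

Definition terms d (Phi : system d) : seq (linpoly d) :=
  [seq c.1 | c <- Phi] ++ [seq c.2 | c <- Phi].

Definition sys_norm d (Phi : system d) : nat := \max_(t <- terms Phi) lp_norm t.

Definition bitlen (n : nat) : nat := (1 + up_log 2 n.+1)%N.

Inductive inM d (Phi : system d) (f : linpoly d) : linpoly d -> Prop :=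
| M_gen : inM Phi f f
| M_lin (p q : linpoly d) (a b : int) :
    inM Phi f p -> inM Phi f q -> inM Phi f (lp_add (lp_scale a p) (lp_scale b q))
| M_div (g h : linpoly d) (b : int) :
    (g, h) \in Phi -> inM Phi f (lp_scale b g) -> inM Phi f (lp_scale b h).

Definition elim_set d (r : {perm 'I_d}) (Phi : system d) (f : linpoly d) (k : nat) :=
  undup [seq c.2 | c <- Phi & (c.1 == f) && (lvl r c.2 <= k)%N].

Definition lin_indep d (s : seq (linpoly d)) : Prop :=
  forall c : linpoly d -> int, lincomb c s = lp0 d -> forall g, g \in s -> c g = 0.

Definition elimination_property d (r : {perm 'I_d}) (Phi : system d) : Prop :=
  forall f : linpoly d, (exists2 c, c \in Phi & is_prim_part f c.1) ->
  forall k : nat, (k <= d)%N ->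
    lin_indep (elim_set r Phi f k) /\
    (forall h, inM Phi f h -> (lvl r h <= k)%N ->
       exists c : linpoly d -> int, h = lincomb c (elim_set r Phi f k)).

Inductive inDelta_f d (r : {perm 'I_d}) (Phi : system d) (f : linpoly d) : linpoly d -> Prop :=
| D_term t : t \in terms Phi -> inDelta_f r Phi f t
| D_spoly g h : (f, g) \in Phi -> inDelta_f r Phi f h -> lvl r g = lvl r h ->
    inDelta_f r Phi f (spoly r g h).

Definition inDelta d (r : {perm 'I_d}) (Phi : system d) (p : linpoly d) : Prop :=
  exists2 f, (exists2 t, t \in terms Phi & is_prim_part f t) & inDelta_f r Phi f p.

(* Main.v *)
Require Import Defs.
From HB Require Import structures.
From mathcomp Require Import all_boot all_order all_algebra all_fingroup zify.
Set Implicit Arguments. Unset Strict Implicit. Unset Printing Implicit Defensive.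
Import Order.TTheory GRing.Theory Num.Theory.
Local Open Scope ring_scope.

Lemma lpext d (p q : linpoly d) : (forall i, p.1 i = q.1 i) -> p.2 = q.2 -> p = q.
Proof. case: p q => [p1 p2] [q1 q2] /= H ->; congr pair; apply/ffunP => i; exact: H. Qed.

Lemma lp_addE d (p q : linpoly d) : lp_add p q = p + q.
Proof. by []. Qed.
Lemma lp0E d : lp0 d = 0.
Proof. by []. Qed.
Lemma lpD1 d (p q : linpoly d) i : (p + q).1 i = p.1 i + q.1 i.
Proof. by rewrite /= ffunE. Qed.
Lemma lpD2 d (p q : linpoly d) : (p + q).2 = p.2 + q.2.
Proof. by []. Qed.
Lemma lpN1 d (p : linpoly d) i : (- p).1 i = - p.1 i.
Proof. by rewrite /= ffunE. Qed.
Lemma lpN2 d (p : linpoly d) : (- p).2 = - p.2.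
Proof. by []. Qed.
Lemma lp01 d i : (0 : linpoly d).1 i = 0.
Proof. by rewrite /= ffunE. Qed.
Lemma lp02 d : (0 : linpoly d).2 = 0.
Proof. by []. Qed.
Lemma lpS1 d a (p : linpoly d) i : (lp_scale a p).1 i = a * p.1 i.
Proof. by rewrite /= ffunE. Qed.
Lemma lpS2 d a (p : linpoly d) : (lp_scale a p).2 = a * p.2.
Proof. by []. Qed.

Ltac lpsimp := rewrite ?lpD1 ?lpD2 ?lpN1 ?lpN2 ?lp01 ?lp02 ?lpS1 ?lpS2.

Lemma lp_scale1 d (p : linpoly d) : lp_scale 1 p = p.
Proof. by apply: lpext => [i|]; lpsimp; rewrite mul1r. Qed.
Lemma lp_scale0 d (p : linpoly d) : lp_scale 0 p = 0.
Proof. by apply: lpext => [i|]; lpsimp; rewrite mul0r. Qed.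
Lemma lp_scaleB d a b (p : linpoly d) : lp_scale (a - b) p = lp_scale a p - lp_scale b p.
Proof. by apply: lpext => [i|]; lpsimp; rewrite mulrBl. Qed.

Lemma lincombE d c (s : seq (linpoly d)) : lincomb c s = \sum_(g <- s) lp_scale (c g) g.
Proof. elim: s => [|g s IH] /=; first by rewrite big_nil. by rewrite big_cons IH. Qed.

Lemma sum_pred1 d (L : seq (linpoly d)) g a : g \in L -> uniq L ->
  \sum_(h <- L) lp_scale (if h == g then a else 0) h = lp_scale a g.
Proof.
move=> gL uL; rewrite (bigD1_seq g) //= eqxx big1 ?addr0 // => h /negbTE ->.
exact: lp_scale0.
Qed.

Lemma spolyE d r (g h : linpoly d) :
  spoly r g h = lp_scale (lcoef r h) g - lp_scale (lcoef r g) h.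
Proof. by apply: lpext => [i|]; rewrite /spoly /lp_sub /lp_add /=; lpsimp; rewrite ?ffunE mulN1r. Qed.

Lemma lvl_le d (r : {perm 'I_d}) (p : linpoly d) : (lvl r p <= d)%N.
Proof. by apply/bigmax_leqP => i _; exact: ltn_ord. Qed.

Lemma lvl_ge d (r : {perm 'I_d}) (p : linpoly d) i : p.1 i != 0 -> ((r i).+1 <= lvl r p)%N.
Proof. move=> H; exact: (@leq_bigmax_cond _ _ (fun i => (r i).+1) i H). Qed.

Lemma lvl_zero d (r : {perm 'I_d}) (p : linpoly d) i : (lvl r p < (r i).+1)%N -> p.1 i = 0.
Proof. move=> H; apply/eqP; apply: contraTT H => /(lvl_ge r); by rewrite -leqNgt. Qed.

Lemma lvl_leP d (r : {perm 'I_d}) (p : linpoly d) k :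
  (forall i, (k < (r i).+1)%N -> p.1 i = 0) -> (lvl r p <= k)%N.
Proof.
move=> H; apply/bigmax_leqP => i Hi; rewrite leqNgt; apply/negP => /H/eqP.
by rewrite (negbTE Hi).
Qed.

Lemma lvl_wit d (r : {perm 'I_d}) (p : linpoly d) : (0 < lvl r p)%N ->
  exists i, (r i).+1 = lvl r p /\ p.1 i != 0.
Proof.
move=> H.
have: (0 < #|[pred i | p.1 i != 0]|)%N.
  rewrite lt0n; apply/negP => /eqP/card0_eq E.
  suff: (lvl r p <= 0)%N by rewrite leqNgt H.
  apply/bigmax_leqP => i Hi; by move: (E i); rewrite inE Hi.
move=> /(eq_bigmax_cond (fun i => (r i).+1)) [i Hi E].
exists i; split; last by move: Hi; rewrite inE.
by rewrite -E.
Qed.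

Lemma lvl0 d (r : {perm 'I_d}) (p : linpoly d) : lvl r p = 0%N -> forall i, p.1 i = 0.
Proof. move=> H i; apply: (lvl_zero (r:=r)); by rewrite H. Qed.

Lemma lcoef_pos d (r : {perm 'I_d}) (p : linpoly d) i : (r i).+1 = lvl r p -> lcoef r p = p.1 i.
Proof.
move=> Hi; rewrite /lcoef; case: pickP => [j /eqP Hj|H]; last by move: (H i); rewrite Hi eqxx.
have: r j = r i by apply: val_inj; apply: succn_inj; rewrite Hj Hi.
by move/perm_inj ->.
Qed.

Lemma lcoef0 d (r : {perm 'I_d}) (p : linpoly d) : lvl r p = 0%N -> lcoef r p = p.2.
Proof. move=> H; rewrite /lcoef; case: pickP => [j|//] /=; by rewrite H. Qed.

Lemma lcoef_neq0 d (r : {perm 'I_d}) (p : linpoly d) : (0 < lvl r p)%N -> lcoef r p != 0.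
Proof. by move=> /lvl_wit [i [Hi Hn]]; rewrite (lcoef_pos Hi). Qed.

Lemma lvl_lp0 d (r : {perm 'I_d}) : lvl r (0 : linpoly d) = 0%N.
Proof. apply/eqP; rewrite -leqn0; apply: lvl_leP => i _; exact: lp01. Qed.

Lemma spoly_lvl d (r : {perm 'I_d}) (g h : linpoly d) : lvl r g = lvl r h -> (0 < lvl r h)%N ->
  (lvl r (spoly r g h) < lvl r h)%N.
Proof.
move=> E H; have [i0 [Hi0 _]] := lvl_wit H.
suff L : (lvl r (spoly r g h) <= (lvl r h).-1)%N by rewrite -ltnS prednK // in L.
rewrite spolyE; apply: lvl_leP => i Hi; lpsimp.
have {}Hi : (lvl r h <= (r i).+1)%N by rewrite -(prednK H).
move: Hi; rewrite leq_eqVlt => /orP [/eqP Ei|Hlt]; last first.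
  by rewrite (lvl_zero Hlt) (lvl_zero (r:=r) (p:=g)) ?E // !mulr0 subrr.
rewrite (lcoef_pos (esym Ei)) (lcoef_pos (r:=r) (p:=g) (i:=i)) ?E //; by rewrite mulrC subrr.
Qed.


Lemma spoly_const d (r : {perm 'I_d}) (g h : linpoly d) : lvl r g = 0%N -> lvl r h = 0%N -> spoly r g h = 0.
Proof.
move=> Hg Hh; rewrite spolyE; apply: lpext => [i|]; lpsimp.
  by rewrite (lvl0 Hg) (lvl0 Hh) !mulr0 subrr.
by rewrite (lcoef0 Hg) (lcoef0 Hh) mulrC subrr.
Qed.

Lemma norm1 d (p : linpoly d) i : (`|p.1 i| <= lp_norm p)%N.
Proof. rewrite /lp_norm; apply: leq_trans (leq_maxl _ _); exact: (@leq_bigmax _ (fun i => `|p.1 i|%N)). Qed.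
Lemma norm2 d (p : linpoly d) : (`|p.2| <= lp_norm p)%N.
Proof. exact: leq_maxr. Qed.
Lemma norm_lcoef d (r : {perm 'I_d}) (p : linpoly d) : (`|lcoef r p| <= lp_norm p)%N.
Proof. rewrite /lcoef; case: pickP => [j _|_]; [exact: norm1|exact: norm2]. Qed.
Lemma norm_le d (p : linpoly d) n :
  (forall i, `|p.1 i| <= n)%N -> (`|p.2| <= n)%N -> (lp_norm p <= n)%N.
Proof. move=> H1 H2; rewrite /lp_norm geq_max H2 andbT; by apply/bigmax_leqP => i _. Qed.

Lemma norm_spoly d (r : {perm 'I_d}) (g h : linpoly d) :
  (lp_norm (spoly r g h) <= 2 * lp_norm g * lp_norm h)%N.
Proof.
have key : forall (a x b y : int), (`|a| <= lp_norm h)%N -> (`|x| <= lp_norm g)%N ->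
   (`|b| <= lp_norm g)%N -> (`|y| <= lp_norm h)%N ->
   (`|(a * x - b * y)%R| <= 2 * lp_norm g * lp_norm h)%N.
  move=> a x b y Ha Hx Hb Hy.
  apply: (leq_trans (n := `|(a * x)%R| + `|(b * y)%R|)%N); first lia.
  rewrite !abszM -mulnA mul2n -addnn; apply: leq_add.
    by rewrite mulnC leq_mul.
  by rewrite leq_mul.
rewrite spolyE; apply: norm_le => [i|]; lpsimp; apply: key;
  rewrite ?norm_lcoef ?norm1 ?norm2 //.
Qed.

Lemma norm0 d : lp_norm (0 : linpoly d) = 0%N.
Proof. apply/eqP; rewrite -leqn0; apply: norm_le => [i|]; by lpsimp. Qed.

Lemma norm_terms d (Phi : system d) t : t \in terms Phi -> (lp_norm t <= sys_norm Phi)%N.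
Proof. move=> H; rewrite /sys_norm; exact: leq_bigmax_seq. Qed.

Lemma leq_expl m n e : (m <= n)%N -> (m ^ e <= n ^ e)%N.
Proof. move=> H; elim: e => // e IH; by rewrite !expnS leq_mul. Qed.

Lemma delta_norm d (r : {perm 'I_d}) (Phi : system d) f p :
  inDelta_f r Phi f p ->
  (lp_norm p <= (2 * sys_norm Phi).+1 ^ (d - lvl r p) * sys_norm Phi)%N.
Proof.
set N := sys_norm Phi; set K := (2 * N).+1.
elim=> [t Ht|g h Hg Hh IH E].
  by apply: leq_trans (norm_terms Ht) _; rewrite leq_pmull // expn_gt0.
have [H0|Hpos] := posnP (lvl r h).
  by rewrite spoly_const ?E // norm0.
have gt : g \in terms Phi by rewrite mem_cat; apply/orP; right; apply/mapP; exists (f, g).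
have Hl := spoly_lvl E Hpos.
apply: leq_trans (norm_spoly r g h) _.
apply: (@leq_trans (K * (K ^ (d - lvl r h) * N))).
  apply: leq_mul; last exact: IH.
  by apply: leq_trans (leqnSn _); rewrite leq_mul2l norm_terms // orbT.
rewrite mulnA -expnS leq_mul2r; apply/orP; right; apply: leq_pexp2l => //.
have := lvl_le r h; lia.
Qed.

Lemma bit_bound d n N : (n <= (2 * N).+1 ^ d * N)%N ->
  (bitlen n <= (d + 2) * (bitlen N + 1))%N.
Proof.
move=> Hn; rewrite /bitlen.
set U := up_log 2 N.+1.
have HU : (N.+1 <= 2 ^ U)%N by exact: up_logP.
have H1 : (n.+1 <= (2 * N.+1) ^ d * N.+1)%N.
  apply: (@leq_trans ((2 * N.+1) ^ d * N).+1); first by rewrite ltnS (leq_trans Hn) // leq_mul2r leq_expl ?orbT // mulnS.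
  have : (0 < (2 * N.+1) ^ d)%N by rewrite expn_gt0.
  rewrite mulnS; lia.
have H2 : ((2 * N.+1) ^ d * N.+1 <= 2 ^ (U.+1 * d + U))%N.
  rewrite expnD expnM; apply: leq_mul => //; apply: leq_expl; by rewrite expnS leq_mul2l HU orbT.
have := up_log_min (p:=2) (k:=n.+1) (j := U.+1 * d + U) isT (leq_trans H1 H2).
nia.
Qed.

Lemma lp_scaleN d b (p : linpoly d) : lp_scale (- b) p = - lp_scale b p.
Proof. by apply: lpext => [i|]; lpsimp; rewrite mulNr. Qed.

Lemma inM_rhs d (Phi : system d) f g : (f, g) \in Phi -> inM Phi f g.
Proof.
move=> H; have := @M_div d Phi f f g 1 H; rewrite !lp_scale1; apply; exact: M_gen.
Qed.

Lemma inM_spoly d (r : {perm 'I_d}) (Phi : system d) f g1 g2 :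
  (f, g1) \in Phi -> (f, g2) \in Phi -> inM Phi f (spoly r g1 g2).
Proof.
move=> H1 H2; have := M_lin (lcoef r g2) (- lcoef r g1) (inM_rhs H1) (inM_rhs H2).
by rewrite lp_addE lp_scaleN -spolyE.
Qed.

Lemma mem_elim d (r : {perm 'I_d}) (Phi : system d) f g k :
  (f, g) \in Phi -> (lvl r g <= k)%N -> g \in elim_set r Phi f k.
Proof.
move=> H Hk; rewrite mem_undup; apply/mapP; exists (f, g) => //.
by rewrite mem_filter /= eqxx Hk H.
Qed.

Lemma filter_elim d (r : {perm 'I_d}) (Phi : system d) f k k' : (k' <= k)%N ->
  [seq g <- elim_set r Phi f k | (lvl r g <= k')%N] = elim_set r Phi f k'.
Proof.
move=> Hk; rewrite /elim_set filter_undup filter_map -filter_predI; congr undup; congr map.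
apply: eq_filter => c /=.
case: (c.1 == f) => /=; last by rewrite andbF.
case H : (lvl r c.2 <= k')%N => //=; by rewrite (leq_trans H Hk).
Qed.

Lemma prim_self d (f : linpoly d) : primitive f -> is_prim_part f f.
Proof.
move=> H; move: (H) => /andP [H1 /eqP H2]; split => //; split => //.
by rewrite H2 lp_scale1.
Qed.

Lemma core d (r : {perm 'I_d}) (Phi : system d) f g1 g2 :
  elimination_property r Phi -> primitive f ->
  (f, g1) \in Phi -> (f, g2) \in Phi -> g1 != g2 -> lvl r g1 = lvl r g2 ->
  lcoef r g2 = 0.
Proof.
move=> EP Pf H1 H2 Hne E.
set l := lvl r g1.
have Hld : (l <= d)%N by exact: lvl_le.
have [Hind Hspan] := EP f (ex_intro2 _ _ (f, g1) H1 (prim_self Pf)) l Hld.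
set L := elim_set r Phi f l.
have uL : uniq L by exact: undup_uniq.
have g1L : g1 \in L by apply: mem_elim.
have g2L : g2 \in L by apply: mem_elim => //; rewrite /l E.
have [c Hc] : exists c : linpoly d -> int,
    spoly r g1 g2 = \sum_(g <- L | (lvl r g < l)%N) lp_scale (c g) g.
  have [Hl0|Hlp] := posnP l.
    exists (fun _ => 0); rewrite big_pred0; last by move=> g; rewrite Hl0.
    by apply: spoly_const; rewrite -?E; exact: Hl0.
  have Hl1 : (l.-1 <= d)%N by apply: leq_trans (leq_pred _) Hld.
  have Hlv : (lvl r (spoly r g1 g2) <= l.-1)%N.
    have := spoly_lvl E; rewrite -E => /(_ Hlp) HH.
    by rewrite -ltnS prednK.
  have [_ Hspan'] := EP f (ex_intro2 _ _ (f, g1) H1 (prim_self Pf)) l.-1 Hl1.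
  have [c Hc] := Hspan' (spoly r g1 g2) (inM_spoly r H1 H2) Hlv.
  exists c; rewrite Hc lincombE -(filter_elim _ _ _ (leq_pred l)) big_filter.
  apply: eq_bigl => g; by rewrite -ltnS prednK.
set c' := fun g => (if g == g1 then lcoef r g2 else 0) - (if g == g2 then lcoef r g1 else 0)
   - (if (lvl r g < l)%N then c g else 0).
have Hlc : lincomb c' L = lp0 d.
  rewrite lincombE /c'.
  under eq_bigr => g _ do rewrite !lp_scaleB.
  rewrite !sumrB !sum_pred1 //.
  rewrite (eq_bigr (fun i => if (lvl r i < l)%N then lp_scale (c i) i else 0)); last first.
    by move=> i _; case: ifP => // _; exact: lp_scale0.
  by rewrite -big_mkcond -Hc -spolyE subrr.
have := Hind c' Hlc g1 g1L; rewrite /c' eqxx (negbTE Hne) /l ltnn !subr0.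
by [].
Qed.


Lemma uniq_g d (r : {perm 'I_d}) (Phi : system d) f g1 g2 :
  elimination_property r Phi -> primitive f ->
  (f, g1) \in Phi -> (f, g2) \in Phi -> lvl r g1 = lvl r g2 -> g1 = g2.
Proof.
move=> EP Pf H1 H2 E; case: (eqVneq g1 g2) => // Hne1; exfalso.
have Hne2 : g2 != g1 by rewrite eq_sym.
have c2 := core EP Pf H1 H2 Hne1 E.
have c1 := core EP Pf H2 H1 Hne2 (esym E).
have [Hl0|Hlp] := posnP (lvl r g2).
  have Hl1 : lvl r g1 = 0%N by rewrite E.
  move/negP: Hne1; apply; apply/eqP; apply: lpext => [i|].
    by rewrite (lvl0 Hl0) (lvl0 Hl1).
  by rewrite -(lcoef0 Hl0) -(lcoef0 Hl1) c1 c2.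
by move: (lcoef_neq0 Hlp); rewrite c2 eqxx.
Qed.

Definition next d (r : {perm 'I_d}) (Phi : system d) (f h : linpoly d) : linpoly d :=
  if ohead [seq c.2 | c <- Phi & (c.1 == f) && (lvl r c.2 == lvl r h)] is Some g
  then spoly r g h else h.

Lemma next_cases d (r : {perm 'I_d}) (Phi : system d) f h :
  (next r Phi f h = h /\ forall g, (f, g) \in Phi -> lvl r g <> lvl r h) \/
  exists g, [/\ (f, g) \in Phi, lvl r g = lvl r h & next r Phi f h = spoly r g h].
Proof.
rewrite /next; case E : [seq _ | _ <- _ & _] => [|g s] /=.
  left; split => // g Hg Eg.
  have : g \in [seq c.2 | c <- Phi & (c.1 == f) && (lvl r c.2 == lvl r h)].
    by apply/mapP; exists (f, g) => //; rewrite mem_filter /= eqxx Eg eqxx Hg.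
  by rewrite E.
right; exists g; have : g \in [seq c.2 | c <- Phi & (c.1 == f) && (lvl r c.2 == lvl r h)].
  by rewrite E mem_head.
case/mapP => c; rewrite mem_filter => /andP [/andP [/eqP e1 /eqP e2] Hc] ->.
by split => //; rewrite -e1 -surjective_pairing.
Qed.

Lemma next_spoly d (r : {perm 'I_d}) (Phi : system d) f g h :
  elimination_property r Phi -> primitive f ->
  (f, g) \in Phi -> lvl r g = lvl r h -> next r Phi f h = spoly r g h.
Proof.
move=> EP Pf Hg E; case: (next_cases r Phi f h) => [[_ H]|[g' [Hg' E' ->]]].
  by case: (H g Hg E).
by rewrite (uniq_g EP Pf Hg' Hg) // E E'.
Qed.

Lemma spoly_g0 d (r : {perm 'I_d}) (g : linpoly d) : spoly r g 0 = 0.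
Proof.
rewrite spolyE (lcoef0 (lvl_lp0 r)); apply: lpext => [i|]; lpsimp; lpsimp; by rewrite !mulr0 mul0r subrr.
Qed.

Lemma next0 d (r : {perm 'I_d}) (Phi : system d) f : next r Phi f 0 = 0.
Proof. by case: (next_cases r Phi f 0) => [[->]|[g [_ _ ->]]] //; exact: spoly_g0. Qed.

Definition mu d (r : {perm 'I_d}) (p : linpoly d) : nat := if p == 0 then 0%N else (lvl r p).+1.

Lemma mu_dec d (r : {perm 'I_d}) (Phi : system d) f h :
  next r Phi f h = h \/ (mu r (next r Phi f h) < mu r h)%N.
Proof.
case: (next_cases r Phi f h) => [[-> _]|[g [Hg E ->]]]; first by left.
have [H0|Hp] := posnP (lvl r h).
  rewrite spoly_const // ?E //.
  case: (eqVneq h 0) => [->|hn]; first by left.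
  by right; rewrite /mu eqxx (negbTE hn).
right; have hn : h != 0 by apply: contraTneq Hp => ->; rewrite lvl_lp0.
rewrite /mu (negbTE hn); case: ifP => // _.
by rewrite ltnS spoly_lvl.
Qed.

Lemma mu_le d (r : {perm 'I_d}) (p : linpoly d) : (mu r p <= d.+1)%N.
Proof. rewrite /mu; case: ifP => // _; by rewrite ltnS lvl_le. Qed.

Lemma mu0 d (r : {perm 'I_d}) (p : linpoly d) : mu r p = 0%N -> p = 0.
Proof. rewrite /mu; by case: eqP. Qed.

Lemma iter_fix d (r : {perm 'I_d}) (Phi : system d) f t :
  iter d.+2 (next r Phi f) t = iter d.+1 (next r Phi f) t.
Proof.
have H : forall k, (mu r (iter k (next r Phi f) t) + k <= mu r t)%N \/
                  iter k.+1 (next r Phi f) t = iter k (next r Phi f) t.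
  elim=> [|k [IH|IH]]; first by left; rewrite addn0.
    case: (mu_dec r Phi f (iter k (next r Phi f) t)) => [Hf|Hd].
      right; change (next r Phi f (next r Phi f (iter k (next r Phi f) t)) = next r Phi f (iter k (next r Phi f) t)); by rewrite !Hf.
    left; change (mu r (next r Phi f (iter k (next r Phi f) t)) + k.+1 <= mu r t)%N; rewrite addnS; apply: leq_trans IH; by rewrite ltn_add2r.
  right; change (next r Phi f (iter k.+1 (next r Phi f) t) = iter k.+1 (next r Phi f) t); by rewrite IH.
case: (H d.+1) => // Hm.
have : mu r (iter d.+1 (next r Phi f) t) = 0%N.
  have := mu_le r t; lia.
move/mu0 => E; change (next r Phi f (iter d.+1 (next r Phi f) t) = iter d.+1 (next r Phi f) t); by rewrite E next0.
Qed.

Lemma delta_chain d (r : {perm 'I_d}) (Phi : system d) f p :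
  elimination_property r Phi -> primitive f -> inDelta_f r Phi f p ->
  exists2 t, t \in terms Phi & exists2 k, (k < d.+2)%N & p = iter k (next r Phi f) t.
Proof.
move=> EP Pf; elim=> [t Ht|g h Hg Hh [t Ht [k Hk ->]] E].
  by exists t => //; exists 0%N.
exists t => //; rewrite -(next_spoly EP Pf Hg E).
case: (ltnP k.+1 d.+2) => Hk2; first by exists k.+1.
have -> : k = d.+1 by apply/eqP; rewrite eqn_leq -ltnS Hk.
by exists d.+1 => //; exact: iter_fix.
Qed.

Lemma next_id d (r : {perm 'I_d}) (Phi : system d) f h :
  ~~ has (fun c => c.1 == f) Phi -> next r Phi f h = h.
Proof.
move=> Hn; case: (next_cases r Phi f h) => [[->]//|[g [Hg _ _]]].
by move/hasPn: Hn => /(_ _ Hg) /=; rewrite eqxx.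
Qed.

Lemma iter_id T (F : T -> T) x k : F x = x -> iter k F x = x.
Proof. move=> H; elim: k => //= k ->; exact: H. Qed.

Theorem mainTheorem10 (d : nat) (r : {perm 'I_d}) (Phi : system d) :
  (1 <= size Phi)%N ->
  (forall c, c \in Phi -> c.1 != lp0 d) ->
  elimination_property r Phi ->
  (forall s : seq (linpoly d), uniq s -> (forall p, p \in s -> inDelta r Phi p) ->
     (size s <= 2 * (size Phi) ^ 2 * (d + 2))%N) /\
  (forall p, inDelta r Phi p ->
     (bitlen (lp_norm p) <= (d + 2) * (bitlen (sys_norm Phi) + 1))%N).
Proof.
move=> Hm _ EP; split; last first.
  move=> p [f _ Hp]; apply: bit_bound.
  apply: leq_trans (delta_norm Hp) _; rewrite leq_mul2r; apply/orP; right.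
  apply: leq_pexp2l => //; exact: leq_subr.
move=> s us Hs.
have [c0 _] : exists c0 : linpoly d * linpoly d, True by exists (0, 0).
set L := [seq iter tk.2 (next r Phi c.1) tk.1 | c <- Phi,
            tk <- [seq (t, k) | t <- terms Phi, k <- iota 0 d.+2]].
have HL : {subset s <= L}.
  move=> p /Hs [f [t0 _ [_ [Pf _]]] Hp].
  have [t Ht [k Hk Ep]] := delta_chain EP Pf Hp.
  case Hhas : (has (fun c => c.1 == f) Phi).
    case/hasP: Hhas => c Hc /eqP Ec.
    have Htk : (t, k) \in [seq (t1, k0) | t1 <- terms Phi, k0 <- iota 0 d.+2].
      by apply: allpairs_f => //; rewrite mem_iota.
    rewrite Ep -Ec.
    exact: (allpairs_f (fun (c : linpoly d * linpoly d) (tk : linpoly d * nat) => iter tk.2 (next r Phi c.1) tk.1) Hc Htk).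
  have Ept : p = t by rewrite Ep iter_id // next_id // Hhas.
  have [c Hc] : exists c, c \in Phi.
    by move: Hm; case: (Phi) => // c' ? _; exists c'; exact: mem_head.
  have Htk : (t, 0%N) \in [seq (t1, k0) | t1 <- terms Phi, k0 <- iota 0 d.+2].
    by apply: allpairs_f => //; rewrite mem_iota.
  rewrite Ept.
  exact: (allpairs_f (fun (c : linpoly d * linpoly d) (tk : linpoly d * nat) => iter tk.2 (next r Phi c.1) tk.1) Hc Htk).
apply: leq_trans (uniq_leq_size us HL) _.
rewrite /L !size_allpairs size_iota /terms size_cat !size_map.
nia.
Qed.
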